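(* Let $\alpha\in\mathbb R$, $\kappa\in\mathbb N\cup\{\infty\}$, and $(s_j)_{j=0}^\kappa\in\mathcal K^{\ge,e}_{q,\kappa,\alpha}$. (a) For each $n\in\mathbb N_0$ with $2n+1\le\kappa$: $T_{q,n}^*(\mathcal D_n)\subseteq\mathcal D_{\alpha\triangleright n}\subseteq\mathcal D_n$, and $\mathcal N(H_n)\dotplus\mathcal D_n=\mathbb C^{(n+1)q}$, $\mathcal N(H_{\alpha\triangleright n})\dotplus\mathcal D_{\alpha\triangleright n}=\mathbb C^{(n+1)q}$. (b) For each $n\in\mathbb N$ with $2n\le\kappa$: $\mathfrak V_{q,n}^*(\mathcal D_n)\subseteq\mathcal D_{\alpha\triangleright(n-1)}$, $V_{q,n}(\mathcal D_{\alpha\triangleright(n-1)})\subseteq\mathcal D_n$, and $\mathcal N(H_n)\dotplus\mathcal D_n=\mathbb C^{(n+1)q}$, $\mathcal N(H_{\alpha\triangleright(n-1)})\dotplus\mathcal D_{\alpha\triangleright(n-1)}=\mathbb C^{nq}$.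
   Context: $\dotplus$ denotes a direct (not necessarily orthogonal) sum. $H_n:=[s_{j+k}]_{j,k=0}^n$, $s_{\alpha\triangleright j}:=-\alpha s_j+s_{j+1}$, $H_{\alpha\triangleright n}:=[s_{\alpha\triangleright(j+k)}]_{j,k=0}^n$. Classes: $\mathcal K^{\ge}_{q,0,\alpha}$: $s_0$ positive semidefinite; $\mathcal K^{\ge}_{q,2n,\alpha}$ ($n\ge1$): $(s_j)_{j=0}^{2n}$ with $H_n$ and $H_{\alpha\triangleright(n-1)}$ positive semidefinite; $\mathcal K^{\ge}_{q,2n+1,\alpha}$: $(s_j)_{j=0}^{2n+1}$ with $H_n$ and $H_{\alpha\triangleright n}$ positive semidefinite. For finite $m$, $\mathcal K^{\ge,e}_{q,m,\alpha}$: $(s_j)_{j=0}^m$ admitting $s_{m+1}$ with $(s_j)_{j=0}^{m+1}\in\mathcal K^{\ge}_{q,m+1,\alpha}$; $\mathcal K^{\ge,e}_{q,\infty,\alpha}$: $(s_j)_{j=0}^\infty$ with $(s_j)_{j=0}^m\in\mathcal K^{\ge}_{q,m,\alpha}$ for all $m$. Schur complements: $L_0:=s_0$, $L_j:=s_{2j}-\operatorname{row}(s_i)_{i=j}^{2j-1}H_{j-1}^\dagger\operatorname{col}(s_i)_{i=j}^{2j-1}$; $L_{\alpha\triangleright0}:=s_{\alpha\triangleright0}$, $L_{\alpha\triangleright j}:=s_{\alpha\triangleright2j}-\operatorname{row}(s_{\alpha\triangleright i})_{i=j}^{2j-1}H_{\alpha\triangleright(j-1)}^\dagger\operatorname{col}(s_{\alpha\triangleright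 i})_{i=j}^{2j-1}$ ($\dagger$ Moore–Penrose inverse). $\mathcal D_n:=\mathcal R(\operatorname{diag}(L_0,\dots,L_n))$, $\mathcal D_{\alpha\triangleright n}:=\mathcal R(\operatorname{diag}(L_{\alpha\triangleright0},\dots,L_{\alpha\triangleright n}))$. $T_{q,n}:=[\delta_{j,k+1}I_q]_{j,k=0}^n$, $V_{q,n}:=[\delta_{j,k}I_q]_{j=0,\dots,n;k=0,\dots,n-1}$, $\mathfrak V_{q,n}:=[\delta_{j,k+1}I_q]_{j=0,\dots,n;k=0,\dots,n-1}$. *)

(* Defs.v *)
From Stdlib Require Import ClassicalEpsilon.
From HB Require Import structures.
From mathcomp Require Import all_boot all_order all_algebra.
Set Implicit Arguments.
Unset Strict Implicit.
Unset Printing Implicit Defensive.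
Import Order.TTheory GRing.Theory Num.Theory.
Local Open Scope ring_scope.

Section Defs.
Variable C : numClosedFieldType.

Definition bs (q n : nat) : nat := (\sum_(i < n) q)%N.

Definition ctr m n (A : 'M[C]_(m, n)) : 'M[C]_(n, m) := (map_mx Num.conj A)^T.

Definition psd n (A : 'M[C]_n) : Prop :=
  ctr A = A /\ forall x : 'cV[C]_n, 0 <= (ctr x *m A *m x) 0 0.

Definition penrose m n (A : 'M[C]_(m, n)) (X : 'M[C]_(n, m)) : Prop :=
  [/\ A *m X *m A = A, X *m A *m X = X,
      ctr (A *m X) = A *m X & ctr (X *m A) = X *m A].
Definition mpinv m n (A : 'M[C]_(m, n)) : 'M[C]_(n, m) :=
  epsilon (inhabits 0) (penrose A).

Definition sshift q (alpha : C) (s : nat -> 'M[C]_q) : nat -> 'M[C]_q :=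
  fun j => - alpha *: s j + s j.+1.

Definition Hank q (s : nat -> 'M[C]_q) n : 'M[C]_(bs q n.+1) :=
  @mxblock C n.+1 n.+1 (fun _ => q) (fun _ => q)
    (fun j k => s (j + k)%N).

Definition Kge q (alpha : C) (s : nat -> 'M[C]_q) (m : nat) : Prop :=
  if m is 0 then psd (s 0%N)
  else if odd m then psd (Hank s m./2) /\ psd (Hank (sshift alpha s) m./2)
  else psd (Hank s m./2) /\ psd (Hank (sshift alpha s) (m./2).-1).

(* kappa in N u {infinity}: None stands for infinity *)
Definition le_kappa (k : nat) (kappa : option nat) : Prop :=
  if kappa is Some K then (k <= K)%N else True.

(* the classes K^{>=,e}_{q,kappa,alpha}; only s_0,...,s_kappa are relevant *)
Definition Kge_e q (alpha : C) (kappa : option nat) (s : nat -> 'M[C]_q) : Prop :=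
  match kappa with
  | Some m => exists t : 'M[C]_q,
      Kge alpha (fun j => if j == m.+1 then t else s j) m.+1
  | None => forall m, Kge alpha s m
  end.

Definition Lschur q (s : nat -> 'M[C]_q) (j : nat) : 'M[C]_q :=
  match j with
  | 0 => s 0%N
  | j'.+1 =>
      s (j'.+1).*2 -
      (mxrow (fun i : 'I_j'.+1 => s (j'.+1 + i)%N : 'M[C]_(q, q)))
        *m mpinv (Hank s j')
        *m (mxcol (fun i : 'I_j'.+1 => s (j'.+1 + i)%N : 'M[C]_(q, q)))
  end.

Definition Ldiag q (s : nat -> 'M[C]_q) n : 'M[C]_(bs q n.+1) :=
  @mxdiag C n.+1 (fun _ => q) (fun j => Lschur s j).

(* Subspaces of C^N are encoded (mxalgebra style) as row spaces of matrices
   whose rows are the transposes of the column vectors of the subspace. *)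
Definition rangesp m n (A : 'M[C]_(m, n)) : 'M[C]_(n, m) := A^T.
Definition nullsp m n (A : 'M[C]_(m, n)) : 'M[C]_n := kermx A^T.
Definition imgsp a b k (M : 'M[C]_(a, b)) (S : 'M[C]_(k, b)) : 'M[C]_(k, a) :=
  S *m M^T.
Definition dsum_full N k l (U : 'M[C]_(k, N)) (W : 'M[C]_(l, N)) : Prop :=
  (U :&: W <= (0 : 'M[C]_N))%MS /\ (1%:M <= U + W)%MS.

Definition Dsp q (s : nat -> 'M[C]_q) n : 'M[C]_(bs q n.+1) := rangesp (Ldiag s n).

Definition Tmx q n : 'M[C]_(bs q n.+1) :=
  @mxblock C n.+1 n.+1 (fun _ => q) (fun _ => q)
    (fun j k => if val j == (val k).+1 then 1%:M else 0).
Definition Vmx q n : 'M[C]_(bs q n.+1, bs q n) :=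
  @mxblock C n.+1 n (fun _ => q) (fun _ => q)
    (fun j k => if val j == val k then 1%:M else 0).
Definition fVmx q n : 'M[C]_(bs q n.+1, bs q n) :=
  @mxblock C n.+1 n (fun _ => q) (fun _ => q)
    (fun j k => if val j == (val k).+1 then 1%:M else 0).

End Defs.

(* Main.v *)
Require Import Defs.
From HB Require Import structures.
From mathcomp Require Import all_boot all_order all_algebra.
From mathcomp Require Import ring zify.
From Stdlib Require Import ClassicalEpsilon.
Import Order.TTheory GRing.Theory Num.Theory.
Local Open Scope ring_scope.
Set Implicit Arguments.
Unset Strict Implicit.
Unset Printing Implicit Defensive.

Section Ctr.
Variable C : numClosedFieldType.

Lemma ctrK m n (A : 'M[C]_(m, n)) : ctr (ctr A) = A.
Proof. by apply/matrixP => i j; rewrite !mxE conjCK. Qed.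

Lemma ctrM m n p (A : 'M[C]_(m, n)) (B : 'M[C]_(n, p)) :
  ctr (A *m B) = ctr B *m ctr A.
Proof. by rewrite /ctr map_mxM trmx_mul. Qed.

Lemma ctrD m n (A B : 'M[C]_(m, n)) : ctr (A + B) = ctr A + ctr B.
Proof. by rewrite /ctr map_mxD linearD. Qed.

Lemma ctrN m n (A : 'M[C]_(m, n)) : ctr (- A) = - ctr A.
Proof. by rewrite /ctr map_mxN linearN. Qed.

Lemma ctrB m n (A B : 'M[C]_(m, n)) : ctr (A - B) = ctr A - ctr B.
Proof. by rewrite ctrD ctrN. Qed.

Lemma ctr0 m n : ctr (0 : 'M[C]_(m, n)) = 0.
Proof. by apply/matrixP => i j; rewrite !mxE conjC0. Qed.

Lemma ctr1 n : ctr (1%:M : 'M[C]_n) = 1%:M.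
Proof. by apply/matrixP => i j; rewrite !mxE eq_sym; case: (_ == _); rewrite ?conjC1 ?conjC0. Qed.

Lemma ctrZ m n a (A : 'M[C]_(m, n)) : ctr (a *: A) = a^* *: ctr A.
Proof. by apply/matrixP => i j; rewrite !mxE rmorphM. Qed.

Lemma ctr_inv n (A : 'M[C]_n) : ctr (invmx A) = invmx (ctr A).
Proof. by rewrite /ctr map_invmx trmx_inv. Qed.

Lemma ctr_sum I (r : seq I) (P : pred I) m n (F : I -> 'M[C]_(m, n)) :
  ctr (\sum_(i <- r | P i) F i) = \sum_(i <- r | P i) ctr (F i).
Proof.
elim/big_rec2: _ => [|i A B _ <-]; first exact: ctr0. by rewrite ctrD.
Qed.

Lemma ctr_mxcol p (p_ : 'I_p -> nat) n (B : forall i, 'M[C]_(p_ i, n)) :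
  ctr (mxcol B) = mxrow (fun i => ctr (B i)).
Proof. by apply/matrixP => i j; rewrite !mxE. Qed.

Lemma ctr_mxrow p (p_ : 'I_p -> nat) n (B : forall i, 'M[C]_(n, p_ i)) :
  ctr (mxrow B) = mxcol (fun i => ctr (B i)).
Proof. by apply/matrixP => i j; rewrite !mxE. Qed.

Lemma ctr_mxblock p r (p_ : 'I_p -> nat) (r_ : 'I_r -> nat)
   (B : forall i j, 'M[C]_(p_ i, r_ j)) :
  ctr (mxblock B) = mxblock (fun i j => ctr (B j i)).
Proof. by apply/matrixP => i j; rewrite !mxE. Qed.

Lemma ctr_mxdiag p (p_ : 'I_p -> nat) (B : forall i, 'M[C]_(p_ i)) :
  ctr (mxdiag B) = mxdiag (fun i => ctr (B i)).
Proof.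
rewrite /mxdiag ctr_mxblock; apply/eq_mxblock => i j.
rewrite eq_sym; case: eqVneq => [->|]; last by rewrite ctr0.
by rewrite !conform_mx_id.
Qed.

Lemma cnorm_ge0 n (x : 'cV[C]_n) : 0 <= (ctr x *m x) 0 0.
Proof.
rewrite !mxE; apply: sumr_ge0 => i _; rewrite !mxE mulrC; exact: mul_conjC_ge0.
Qed.

Lemma cnorm_eq0 n (x : 'cV[C]_n) : (ctr x *m x) 0 0 = 0 -> x = 0.
Proof.
rewrite !mxE => /eqP; rewrite psumr_eq0 => [/allP H|i _]; last first.
  by rewrite !mxE mulrC; exact: mul_conjC_ge0.
apply/matrixP => i j; rewrite ord1 mxE.
have /implyP := H i (mem_index_enum _) => /(_ isT).
by rewrite !mxE mulrC mul_conjC_eq0 => /eqP.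
Qed.

Lemma rnorm_eq0 n (w : 'rV[C]_n) : (w *m ctr w) 0 0 = 0 -> w = 0.
Proof.
move=> H; have: ctr w = 0 by apply: cnorm_eq0; rewrite ctrK.
by move/(congr1 (@ctr _ _ _)); rewrite ctrK ctr0.
Qed.


Lemma psd_ker n (A : 'M[C]_n) (x : 'cV[C]_n) :
  psd A -> (ctr x *m A *m x) 0 0 = 0 -> A *m x = 0.
Proof.
move=> [hA pA] h0; set y := A *m x.
have Hc : ctr x *m A *m y = ctr y *m y by rewrite /y ctrM hA mulmxA.
have Hc' : ctr y *m A *m x = ctr y *m y by rewrite -mulmxA.
set c := (ctr y *m y) 0 0; set d := (ctr y *m A *m y) 0 0.
have c0 : 0 <= c := cnorm_ge0 y.
have d0 : 0 <= d := pA y.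
have [cz|cnz] := eqVneq c 0; first exact: cnorm_eq0.
have cp : 0 < c by rewrite lt_def cnz.
have d1 : 0 < d + 1 by rewrite ltr_wpDl.
set e := c / (d + 1).
have ee : e^* = e by apply: geC0_conj; rewrite divr_ge0 // ltW.
have := pA (x - e *: y).
have -> : ctr (x - e *: y) *m A *m (x - e *: y) =
   ctr x *m A *m x - e *: (ctr x *m A *m y) - e *: (ctr y *m A *m x)
   + (e * e) *: (ctr y *m A *m y).
  rewrite ctrB ctrZ ee mulmxBl !mulmxBr -!scalemxAl -!scalemxAr.
  rewrite !mulmxBl -!scalemxAl scalerBr scalerA opprB !addrA.
  by rewrite addrAC (addrAC (ctr x *m A *m x)).
rewrite Hc Hc'.
have E (M1 M2 M3 M4 : 'M[C]_1) a1 a2 a3 : (M1 - a1 *: M2 - a2 *: M3 + a3 *: M4) 0 0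
  = M1 0 0 - a1 * M2 0 0 - a2 * M3 0 0 + a3 * M4 0 0 by rewrite !mxE.
rewrite E h0 -/c -/d.
have -> : 0 - e * c - e * c + e * e * d = - (c ^+ 2 * (d + 2%:R) / (d + 1) ^+ 2).
  rewrite /e; field; by rewrite lt0r_neq0.
rewrite oppr_ge0 => H.
have : 0 < c ^+ 2 * (d + 2%:R) / (d + 1) ^+ 2.
  by rewrite divr_gt0 ?exprn_gt0 // mulr_gt0 ?exprn_gt0 // ltr_wpDl.
by move=> /lt_geF; rewrite H.
Qed.

Lemma unit_mctr r m (M : 'M[C]_(r, m)) : row_free M -> M *m ctr M \in unitmx.
Proof.
move=> fM; rewrite -row_free_unit -kermx_eq0; apply/eqP/row_matrixP => i.
rewrite row0; set v := row i _.
have H : v *m (M *m ctr M) = 0 by rewrite /v -row_mul mulmx_ker row0.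
have : (v *m M) *m ctr (v *m M) = 0 by rewrite ctrM mulmxA -(mulmxA v) H mul0mx.
move=> H2; have /rnorm_eq0 : ((v *m M) *m ctr (v *m M)) 0 0 = 0 by rewrite H2 mxE.
by move=> H3; apply: (row_free_inj fM); rewrite H3 mul0mx.
Qed.

Lemma rank_ctr m n (A : 'M[C]_(m, n)) : \rank (ctr A) = \rank A.
Proof. by rewrite /ctr mxrank_tr mxrank_map. Qed.

Lemma mp_fact m n r (F : 'M[C]_(m, r)) (G : 'M[C]_(r, n)) :
  ctr F *m F \in unitmx -> G *m ctr G \in unitmx ->
  penrose (F *m G) (ctr G *m invmx (G *m ctr G) *m invmx (ctr F *m F) *m ctr F).
Proof.
set P := ctr F *m F; set Q := G *m ctr G => uP uQ.
have hP : ctr P = P by rewrite /P ctrM ctrK.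
have hQ : ctr Q = Q by rewrite /Q ctrM ctrK.
have eQl k (M : 'M_(k, r)) : M *m G *m ctr G *m invmx Q = M.
  by rewrite -(mulmxA M G) -mulmxA -/Q mulmxV ?mulmx1.
have ePr k (M : 'M_(k, r)) : M *m invmx P *m ctr F *m F = M.
  by rewrite -!mulmxA -/P mulVmx ?mulmx1.
split.
- by rewrite !mulmxA eQl ePr.
- by rewrite !mulmxA ePr eQl.
- rewrite !mulmxA eQl !ctrM ctrK ctr_inv hP mulmxA //.
- rewrite !mulmxA ePr !ctrM ctrK ctr_inv hQ mulmxA //.
Qed.

Lemma mp_exists m n (A : 'M[C]_(m, n)) : exists X, penrose A X.
Proof.
have eA : col_base A *m row_base A = A := mulmx_base A.
have fF : row_free (ctr (col_base A)).
  by rewrite /row_free rank_ctr; have := col_base_full A.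
have uP := unit_mctr fF; rewrite ctrK in uP.
have uQ := unit_mctr (row_base_free A).
by eexists; rewrite -[X in penrose X]eA; apply: mp_fact.
Qed.

Lemma mpinv_spec m n (A : 'M[C]_(m, n)) : penrose A (mpinv A).
Proof. by rewrite /mpinv; apply: epsilon_spec; apply: mp_exists. Qed.

Lemma ctr_map m n (A : 'M[C]_(m, n)) : ctr A = map_mx Num.conj A^T.
Proof. by rewrite /ctr map_trmx. Qed.

Lemma colM m n p (A : 'M[C]_(m, n)) (B : 'M[C]_(n, p)) j :
  col j (A *m B) = A *m col j B.
Proof. by apply/matrixP => a b; rewrite !mxE; apply: eq_bigr => k _; rewrite !mxE. Qed.

Lemma range_sub m n k (A : 'M[C]_(m, n)) (B : 'M[C]_(m, k)) :
  (forall y : 'cV[C]_m, ctr B *m y = 0 -> ctr A *m y = 0) ->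
  (rangesp A <= rangesp B)%MS.
Proof.
move=> H; rewrite /rangesp submxE; set K := cokermx B^T.
have HB : B^T *m K = 0 := mulmx_coker _.
apply/eqP/matrixP => a j.
have -> : (A^T *m K) a j = col j (A^T *m K) a 0 by rewrite [RHS]mxE.
suff Hc : A^T *m col j K = 0 by rewrite colM Hc !mxE.
have : ctr A *m map_mx Num.conj (col j K) = 0.
  apply: H; rewrite ctr_map -map_mxM -colM HB col0.
  by rewrite raddf0.
rewrite ctr_map -map_mxM => /(congr1 (map_mx Num.conj)).
have cc p r (M : 'M[C]_(p, r)) : map_mx Num.conj (map_mx Num.conj M) = M.
  by apply/matrixP => a1 b1; rewrite !mxE conjCK.
by rewrite cc => ->; rewrite raddf0.
Qed.

Lemma cap0_of m k l (U : 'M[C]_(k, m)) (W : 'M[C]_(l, m)) :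
  (forall v : 'rV[C]_m, (v <= U)%MS -> (v <= W)%MS -> v = 0) ->
  (U :&: W <= (0 : 'M[C]_m))%MS.
Proof.
move=> H; rewrite submx0; apply/eqP/row_matrixP => i; rewrite row0; apply: H.
  exact: submx_trans (row_sub _ _) (capmxSl _ _).
exact: submx_trans (row_sub _ _) (capmxSr _ _).
Qed.

Lemma full_of m k l (U : 'M[C]_(k, m)) (W : 'M[C]_(l, m)) :
  (forall v : 'rV[C]_m, (v <= U + W)%MS) -> (1%:M <= U + W)%MS.
Proof. by move=> H; apply/row_subP => i; apply: H. Qed.

Lemma herm_ker n (L : 'M[C]_n) (w : 'cV[C]_n) :
  ctr L = L -> L *m (L *m w) = 0 -> L *m w = 0.
Proof.
move=> hL H; apply: cnorm_eq0.
by rewrite ctrM hL -mulmxA H mulmx0 mxE.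
Qed.

Lemma herm_decomp n (L : 'M[C]_n) : ctr L = L ->
  forall x : 'cV[C]_n, exists a c, L *m a = 0 /\ x = a + L *m c.
Proof.
move=> hL x.
have cap : (kermx L^T :&: L^T <= (0 : 'M[C]_n))%MS.
  apply: cap0_of => v /sub_kermxP h1 /submxP [d hd].
  have hv : v^T = L *m d^T by rewrite hd trmx_mul trmxK.
  have h2 : L *m v^T = 0 by rewrite -[L]trmxK -trmx_mul h1 trmx0.
  have e1 : L *m (L *m d^T) = 0 by rewrite -hv.
  by rewrite -[v]trmxK hv (herm_ker hL e1) trmx0.
have hr := mxrank_disjoint_sum (eqP (etrans (esym (submx0 _)) cap)).
have full : (1%:M <= kermx L^T + L^T)%MS.
  rewrite sub1mx /row_full hr mxrank_ker subnK //; exact: rank_leq_col.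
have /sub_addsmxP [[u1 u2] /= hu] := submx_trans (submx1 x^T) full.
exists (u1 *m kermx L^T)^T, u2^T; split.
  by apply: trmx_inj; rewrite trmx_mul trmxK -mulmxA mulmx_ker mulmx0 trmx0.
by rewrite -[x]trmxK hu linearD /= [X in _ + X]trmx_mul trmxK.
Qed.
End Ctr.

Section Blocks.
Variable C : numClosedFieldType.
Variable q : nat.
Implicit Types (f g : nat -> 'cV[C]_q) (s : nat -> 'M[C]_q).

Definition vec n f : 'cV[C]_(bs q n.+1) :=
  @mxcol C n.+1 (fun _ => q) 1 (fun j => f j).

Definition blk n (x : 'cV[C]_(bs q n.+1)) : nat -> 'cV[C]_q :=
  fun j => if (j < n.+1)%N then @submxcol C n.+1 (fun _ => q) 1 x (inord j) else 0.

Lemma vec_blk n x : vec n (blk x) = x.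
Proof.
rewrite /vec -[RHS]submxcolK; apply/eq_mxcol => i.
by rewrite /blk ltn_ord inord_val.
Qed.

Lemma blk_vec n f j : (j <= n)%N -> blk (vec n f) j = f j.
Proof. by move=> hj; rewrite /blk ltnS hj mxcolK inordK. Qed.

Lemma blk_out n x j : (n < j)%N -> @blk n x j = 0.
Proof. by move=> h; rewrite /blk ltnS leqNgt h. Qed.

Lemma vec_eq n f g : (forall j, (j <= n)%N -> f j = g j) -> vec n f = vec n g.
Proof. by move=> H; apply/eq_mxcol => i; rewrite H // -ltnS. Qed.

Lemma vec_eq0 n f : vec n f = 0 -> forall j, (j <= n)%N -> f j = 0.
Proof.
move=> H j hj; rewrite -(blk_vec f hj) H /blk ltnS hj.
by rewrite submxcol0.
Qed.

Lemma vecD n f g : vec n (fun j => f j + g j) = vec n f + vec n g.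
Proof. by rewrite /vec mxcolD. Qed.

Lemma vecN n f : vec n (fun j => - f j) = - vec n f.
Proof. by rewrite /vec mxcolN. Qed.

Lemma vec0 n : vec n (fun _ => 0) = 0.
Proof. by rewrite /vec mxcol0. Qed.

Definition Hv s n f (a : nat) : 'cV[C]_q := \sum_(0 <= b < n.+1) s (a + b)%N *m f b.

Lemma Hank_vec s n f : Hank s n *m vec n f = vec n (Hv s n f).
Proof.
rewrite /Hank /vec mul_mxblock_mxrow; apply/eq_mxcol => i.
by rewrite /Hv big_mkord.
Qed.

Lemma Ldiag_vec s n f : Ldiag s n *m vec n f = vec n (fun j => Lschur s j *m f j).
Proof. by rewrite /Ldiag /vec mul_mxdiag_mxcol. Qed.

Lemma ctr_vec_vec n f g :
  ctr (vec n f) *m vec n g = \sum_(0 <= a < n.+1) ctr (f a) *m g a.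
Proof. by rewrite /vec ctr_mxcol mul_mxrow_mxcol big_mkord. Qed.



Lemma Hv_trunc s N j f a : (j <= N)%N -> (forall b, (j < b)%N -> f b = 0) ->
  Hv s N f a = Hv s j f a.
Proof.
move=> hj hf; rewrite /Hv (big_cat_nat _ (n := j.+1)) //= [X in _ + X]big1_seq ?addr0 //.
by move=> b /andP[_]; rewrite mem_index_iota => /andP[hb _]; rewrite hf // mulmx0.
Qed.

Lemma HvD s n f g a : Hv s n (fun b => f b + g b) a = Hv s n f a + Hv s n g a.
Proof. by rewrite /Hv -big_split; apply: eq_bigr => b _; rewrite mulmxDr. Qed.

Lemma HvN s n f a : Hv s n (fun b => - f b) a = - Hv s n f a.
Proof. by rewrite /Hv -sumrN; apply: eq_bigr => b _; rewrite mulmxN. Qed.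

Lemma Hv_ext s n f g a : (forall b, (b <= n)%N -> f b = g b) -> Hv s n f a = Hv s n g a.
Proof.
move=> H; rewrite /Hv big_nat_cond [RHS]big_nat_cond; apply: eq_bigr => b /andP[/andP[_ hb] _].
by rewrite H.
Qed.

Lemma Hv_recr s n f a : Hv s n.+1 f a = Hv s n f a + s (a + n.+1)%N *m f n.+1.
Proof. by rewrite /Hv big_nat_recr. Qed.

Lemma psd_herm s N : psd (Hank s N) -> forall k, (k <= N.*2)%N -> ctr (s k) = s k.
Proof.
move=> [hH _] k hk; move: hH; rewrite /Hank ctr_mxblock => /eq_mxblockP H.
have h1 : (minn k N < N.+1)%N by lia.
have h2 : (k - minn k N < N.+1)%N by lia.
have := H (Ordinal h1) (Ordinal h2); rewrite /=.
have -> : (k - minn k N + minn k N = k)%N by lia.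
by have -> : (minn k N + (k - minn k N) = k)%N by lia.
Qed.

Lemma psd_Ker s N f : psd (Hank s N) ->
  \sum_(0 <= a < N.+1) ctr (f a) *m Hv s N f a = 0 ->
  forall a, (a <= N)%N -> Hv s N f a = 0.
Proof.
move=> hp h0; apply: vec_eq0; rewrite -Hank_vec; apply: psd_ker => //.
by rewrite -mulmxA Hank_vec ctr_vec_vec h0 mxE.
Qed.

Lemma psd_Ext s N m f : psd (Hank s N) -> (m <= N)%N ->
  (forall b, (m < b)%N -> f b = 0) -> (forall a, (a <= m)%N -> Hv s N f a = 0) ->
  forall a, (a <= N)%N -> Hv s N f a = 0.
Proof.
move=> hp hm hf hv; apply: psd_Ker => //.
rewrite big_nat_cond big1 // => a /andP[/andP[_ ha] _].
case: (leqP a m) => h; first by rewrite hv // mulmx0.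
by rewrite hf // ctr0 mul0mx.
Qed.

End Blocks.

Section Schur.
Variable C : numClosedFieldType.
Variable q : nat.
Variable s : nat -> 'M[C]_q.
Variable N : nat.
Hypothesis hp : psd (Hank s N).
Implicit Types (f g : nat -> 'cV[C]_q).

Let herm := psd_herm hp.

Lemma Hank_herm m : (m <= N)%N -> ctr (Hank s m) = Hank s m.
Proof.
move=> hm; rewrite /Hank ctr_mxblock; apply/eq_mxblock => i j.
rewrite addnC herm //; have := ltn_ord i; have := ltn_ord j; lia.
Qed.

Definition Ycol m : 'M[C]_(bs q m.+1, q) :=
  @mxcol C m.+1 (fun _ => q) q (fun i => s (m.+1 + i)%N).
Definition Rrow m : 'M[C]_(q, bs q m.+1) :=
  @mxrow C m.+1 (fun _ => q) q (fun i => s (m.+1 + i)%N).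

Lemma LschurS m : Lschur s m.+1 = s (m.+1).*2 - Rrow m *m mpinv (Hank s m) *m Ycol m.
Proof. by []. Qed.

Lemma ctrY m : (m < N)%N -> ctr (Ycol m) = Rrow m.
Proof.
move=> hm; rewrite /Ycol ctr_mxcol; apply/eq_mxrow => i.
rewrite herm //; have := ltn_ord i; lia.
Qed.

Lemma ctrR m : (m < N)%N -> ctr (Rrow m) = Ycol m.
Proof. by move=> hm; rewrite -ctrY // ctrK. Qed.

Lemma Rrow_vec m f : Rrow m *m vec m f = \sum_(0 <= b < m.+1) s (m.+1 + b)%N *m f b.
Proof. by rewrite /Rrow /vec mul_mxrow_mxcol big_mkord. Qed.

Lemma Ycol_mul m u : Ycol m *m u = vec m (fun a => s (m.+1 + a)%N *m u).
Proof. by rewrite /Ycol /vec mxcol_mul. Qed.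

Lemma S1 m : (m < N)%N -> exists Z, Ycol m = Hank s m *m Z.
Proof.
move=> hm.
have : (rangesp (Ycol m) <= rangesp (Hank s m))%MS.
  apply: range_sub => y; rewrite (Hank_herm (ltnW hm)) (ctrY hm) => Hy.
  rewrite -(vec_blk y) Rrow_vec; set f := blk y.
  have fo : forall b, (m < b)%N -> f b = 0 by move=> b hb; rewrite /f blk_out.
  have H1 : forall a, (a <= m)%N -> Hv s N f a = 0.
    move=> a ha; rewrite (Hv_trunc _ _ (ltnW hm)) //.
    by move: Hy; rewrite -(vec_blk y) Hank_vec => /vec_eq0; apply.
  have := psd_Ext hp (ltnW hm) fo H1 hm; rewrite (Hv_trunc _ _ (ltnW hm)) // /Hv.
rewrite /rangesp => /submxP [D HD]; exists D^T.
by rewrite -[Ycol m]trmxK HD trmx_mul trmxK.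
Qed.


Lemma vec_inj n f g : vec n f = vec n g -> forall j, (j <= n)%N -> f j = g j.
Proof. by move=> H j hj; rewrite -(blk_vec f hj) H blk_vec. Qed.

Lemma Schur_props j : (j <= N)%N ->
 [/\ ctr (Lschur s j) = Lschur s j,
     forall f, (forall b, (j < b)%N -> f b = 0) ->
       (forall a, (a <= j)%N -> Hv s j f a = 0) -> Lschur s j *m f j = 0
   & forall u, Lschur s j *m u = 0 -> exists f,
       [/\ forall b, (j < b)%N -> f b = 0, f j = u &
           forall a, (a <= j)%N -> Hv s j f a = 0]].
Proof.
case: j => [|m] hj.
  split => /=; first by rewrite herm.
    by move=> f _ /(_ 0%N isT); rewrite /Hv big_nat1.
  move=> u hu; exists (fun b => if b == 0%N then u else 0); split => //.
    by case.
  move=> a; rewrite leqn0 => /eqP ->; by rewrite /Hv big_nat1.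
have [Z HZ] := S1 hj.
have [pen _ _ _] := mpinv_spec (Hank s m).
have hH := Hank_herm (ltnW hj).
have HR : Rrow m = ctr Z *m Hank s m by rewrite -ctrY // HZ ctrM hH.
have LZ : Lschur s m.+1 = s (m.+1).*2 - Rrow m *m Z.
  rewrite LschurS; congr (_ - _); rewrite HZ {1}HR !mulmxA.
  by rewrite -(mulmxA (ctr Z) (Hank s m)) -(mulmxA (ctr Z)) pen -HR.
have RZu u : Rrow m *m Z *m u = ctr Z *m (Ycol m *m u).
  by rewrite HR HZ !mulmxA.
split.
- rewrite LZ ctrB ctrM herm; last by lia.
  by rewrite ctrR // HZ mulmxA -HR.
- move=> f fo hv; set z := vec m f; set u := f m.+1.
  have e1 : Ycol m *m u = - (Hank s m *m z).
    apply/eqP; rewrite -addr_eq0; apply/eqP.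
    rewrite /z Hank_vec Ycol_mul -vecD -(vec0 C q m); apply: vec_eq => a ha.
    by have := hv a (leqW ha); rewrite Hv_recr addnC addrC.
  have e2 : Rrow m *m z + s (m.+1).*2 *m u = 0.
    by have := hv m.+1 (leqnn _); rewrite Hv_recr -addnn /z Rrow_vec.
  rewrite LZ mulmxBl RZu e1 mulmxN mulmxA -HR opprK.
  by rewrite addrC.
- move=> u hu; set w := - (Z *m u).
  exists (fun b => if b == m.+1 then u else blk w b); split.
  + move=> b hb; rewrite (gtn_eqF hb) blk_out //; exact: ltnW.
  + by rewrite eqxx.
  have e3 : vec m (Hv s m (blk w)) = vec m (fun a => - (s (m.+1 + a)%N *m u)).
    by rewrite -Hank_vec vec_blk /w mulmxN mulmxA -HZ Ycol_mul vecN.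
  have e4 : Hv s m (blk w) m.+1 = - (Rrow m *m Z *m u).
    by rewrite /Hv -Rrow_vec vec_blk /w mulmxN mulmxA.
  move=> a ha; rewrite Hv_recr eqxx.
  rewrite (Hv_ext _ _ (g := blk w)); last first.
    by move=> b hb; rewrite ifN // neq_ltn ltnS hb.
  case: (ltngtP a m.+1) => [hl||he]; last 1 first.
  + by rewrite he e4 addnn addrC -mulmxBl -LZ.
  + by rewrite (vec_inj e3) // addnC addNr.
  + by move=> h; move: ha; rewrite leqNgt h.
Qed.


Lemma Dsum_cap n : (n <= N)%N -> forall w,
  (forall a, (a <= n)%N -> Hv s n (fun b => Lschur s b *m w b) a = 0) ->
  forall b, (b <= n)%N -> Lschur s b *m w b = 0.
Proof.
elim: n => [|n IH] hn w hv.
  have [hL hB _] := Schur_props hn.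
  move=> b; rewrite leqn0 => /eqP ->; apply: herm_ker => //.
  apply: (hB (fun b => if b == 0%N then Lschur s 0 *m w 0%N else 0)) => //.
    by case.
  move=> a ha; rewrite -(hv a ha); apply: Hv_ext => b0; rewrite leqn0 => /eqP -> //.
have [hL hB _] := Schur_props hn.
have hn1 : Lschur s n.+1 *m w n.+1 = 0.
  apply: herm_ker => //.
  have := hB (fun b => if (b <= n.+1)%N then Lschur s b *m w b else 0).
  rewrite leqnn; apply.
    by move=> b hb; rewrite leqNgt hb.
  move=> a ha; rewrite -(hv a ha); apply: Hv_ext => b0 hb0; by rewrite hb0.
move=> b; rewrite leq_eqVlt => /orP[/eqP -> //| hb].
apply: IH => //; first exact: ltnW.
by move=> a ha; have := hv a (leqW ha); rewrite Hv_recr hn1 mulmx0 addr0.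
Qed.

Lemma Dsum_sum n : (n <= N)%N -> forall x : nat -> 'cV[C]_q,
  exists k w, (forall a, (a <= n)%N -> Hv s n k a = 0) /\
              (forall b, (b <= n)%N -> x b = k b + Lschur s b *m w b).
Proof.
elim: n => [|n IH] hn x.
  have [hL _ hC] := Schur_props hn.
  have [a [c [ha hx]]] := herm_decomp hL (x 0%N).
  have [f [fo f0 fh]] := hC a ha.
  exists f, (fun _ => c); split => // b; rewrite leqn0 => /eqP ->; by rewrite f0.
have [hL _ hC] := Schur_props hn.
have [a [c [ha hx]]] := herm_decomp hL (x n.+1).
have [f [fo f0 fh]] := hC a ha.
have [k' [w' [hk' hx']]] := IH (ltnW hn) (fun b => x b - f b).
set k'' := fun b => if (b <= n)%N then k' b else 0.
have ko : forall b, (n < b)%N -> k'' b = 0 by move=> b hb; rewrite /k'' leqNgt hb.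
have hk'' : forall a, (a <= N)%N -> Hv s N k'' a = 0.
  apply: (psd_Ext hp (ltnW hn) ko) => a0 ha0.
  rewrite (Hv_trunc _ _ (ltnW hn) ko) -(hk' a0 ha0); apply: Hv_ext => b hb.
  by rewrite /k'' hb.
exists (fun b => f b + k'' b), (fun b => if (b <= n)%N then w' b else c); split.
  move=> a0 ha0; rewrite HvD fh // add0r.
  rewrite -(Hv_trunc s a0 hn (fun b hb => ko b (ltnW hb))) hk'' //.
  exact: leq_trans ha0 hn.
move=> b; rewrite leq_eqVlt => /orP[/eqP ->|hb].
  by rewrite /k'' ltnn f0 addr0 hx.
rewrite ltnS in hb; by rewrite /k'' hb -addrA -hx' // addrC subrK.
Qed.

End Schur.

Section Main.
Variable C : numClosedFieldType.
Variable q : nat.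

Lemma dsum_main (s : nat -> 'M[C]_q) N n : psd (Hank s N) -> (n <= N)%N ->
  dsum_full (nullsp (Hank s n)) (Dsp s n).
Proof.
move=> hp hn; split.
  apply: cap0_of => v /sub_kermxP h1 /submxP [d hd].
  set w := blk d^T.
  have hx : v^T = vec n (fun b => Lschur s b *m w b).
    by rewrite hd trmx_mul trmxK -Ldiag_vec vec_blk.
  have h2 : Hank s n *m v^T = 0 by rewrite -[Hank s n]trmxK -trmx_mul h1 trmx0.
  rewrite hx Hank_vec in h2.
  have := Dsum_cap hp hn (vec_eq0 h2).
  move=> H0; apply: trmx_inj; rewrite hx trmx0 -(vec0 C q n).
  by apply: vec_eq => b hb; rewrite H0.
apply: full_of => v.
have [k [w [hk hx]]] := Dsum_sum hp hn (blk v^T).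
have e : v = (vec n k)^T + (vec n w)^T *m (Ldiag s n)^T.
  apply: trmx_inj; rewrite linearD /= trmx_mul !trmxK Ldiag_vec -vecD -[LHS]vec_blk.
  exact: vec_eq.
rewrite e; apply: addmx_sub_adds; last exact: submxMl.
apply/sub_kermxP; rewrite -trmx_mul Hank_vec (vec_eq (g := fun _ => 0) hk).
by rewrite vec0 trmx0.
Qed.


Lemma ctr_if1 n (b : bool) : ctr (if b then 1%:M else 0 : 'M[C]_n) = if b then 1%:M else 0.
Proof. by case: b; rewrite ?ctr1 ?ctr0. Qed.

Lemma sum_sel n (F : nat -> 'cV[C]_q) (i : nat) :
  \sum_(k < n) (if (k == i :> nat) then F k else 0) = if (i < n)%N then F i else 0.
Proof. by rewrite -big_mkcond big_ord1_eq. Qed.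

Lemma shift_vec p r (g : nat -> 'cV[C]_q) : (p <= r.+1)%N ->
  @mxblock C p.+1 r.+1 (fun _ => q) (fun _ => q)
    (fun j k => if val j == (val k).+1 then 1%:M else 0) *m vec r g =
  vec p (fun j => if j is j'.+1 then g j' else 0).
Proof.
move=> hpr; rewrite /vec mul_mxblock_mxrow; apply/eq_mxcol => i.
case: i => [[|i] hi] /=.
  by rewrite big1 // => k _; rewrite mul0mx.
rewrite (eq_bigr (fun k : 'I_r.+1 => if (k == i :> nat) then g k else 0)).
  by rewrite sum_sel ifT //; lia.
by move=> k _; rewrite eqSS eq_sym; case: (_ == _); rewrite ?mul1mx ?mul0mx.
Qed.

Lemma diag_vec p r (g : nat -> 'cV[C]_q) : (p <= r)%N ->
  @mxblock C p.+1 r.+1 (fun _ => q) (fun _ => q)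
    (fun j k => if val k == val j then 1%:M else 0) *m vec r g = vec p g.
Proof.
move=> hpr; rewrite /vec mul_mxblock_mxrow; apply/eq_mxcol => i.
rewrite (eq_bigr (fun k : 'I_r.+1 => if (k == i :> nat) then g k else 0)).
  by rewrite sum_sel ifT //; have := ltn_ord i; lia.
by move=> k _; case: (_ == _); rewrite ?mul1mx ?mul0mx.
Qed.

End Main.
Section Shift.
Variable C : numClosedFieldType.
Variable q : nat.
Variable alpha : C.
Variable s : nat -> 'M[C]_q.
Implicit Types (f g : nat -> 'cV[C]_q).

Lemma Hv_shift n f a :
  Hv (sshift alpha s) n f a = Hv s n f a.+1 - alpha *: Hv s n f a.
Proof.
rewrite /Hv /sshift scaler_sumr -sumrB; apply: eq_bigr => b _.
by rewrite mulmxDl addrC -scalemxAl addSn scaleNr.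
Qed.

Lemma HvZ s0 n c f a : Hv s0 n (fun b => c *: f b) a = c *: Hv s0 n f a.
Proof. by rewrite /Hv scaler_sumr; apply: eq_bigr => b _; rewrite scalemxAr. Qed.

Lemma ker_incl1 N N' j : psd (Hank s N) -> psd (Hank (sshift alpha s) N') ->
  (j < N)%N -> (j <= N')%N ->
  forall u : 'cV[C]_q, Lschur s j *m u = 0 -> Lschur (sshift alpha s) j *m u = 0.
Proof.
move=> hp hp' hj hj' u hu.
have [_ _ hC] := Schur_props hp (ltnW hj).
have [f [fo fj fh]] := hC u hu.
have hN := psd_Ext hp (ltnW hj) fo.

have hS a : (a <= j.+1)%N -> Hv s j f a = 0.
  move=> ha; rewrite -(Hv_trunc s a (ltnW hj) fo); apply: hN; last exact: leq_trans ha hj.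
  by move=> a0 ha0; rewrite (Hv_trunc s a0 (ltnW hj) fo) fh.
have [_ hB _] := Schur_props hp' hj'.
rewrite -fj; apply: hB => // a ha.
by rewrite Hv_shift hS // hS ?(leqW ha) // scaler0 subr0.
Qed.

Lemma ker_incl2 N N' j : psd (Hank s N) -> psd (Hank (sshift alpha s) N') ->
  (j < N)%N -> (j < N')%N ->
  forall u : 'cV[C]_q, Lschur (sshift alpha s) j *m u = 0 -> Lschur s j.+1 *m u = 0.
Proof.
move=> hp hp' hj hj' u hu.
have [_ _ hC] := Schur_props hp' (ltnW hj').
have [f [fo fj fh]] := hC u hu.
have hN := psd_Ext hp' (ltnW hj') fo.
have hS a : (a <= j.+1)%N -> Hv (sshift alpha s) j f a = 0.
  move=> ha; rewrite -(Hv_trunc _ a (ltnW hj') fo); apply: hN; last exact: leq_trans ha hj'.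
  by move=> a0 ha0; rewrite (Hv_trunc _ a0 (ltnW hj') fo) fh.
set g := fun b => (if b is b'.+1 then f b' else 0) + - alpha *: f b.
have [_ hB _] := Schur_props hp hj.
have -> : u = g j.+1 by rewrite /g (fo j.+1) // scaler0 addr0 fj.
apply: hB.
  move=> b hb; rewrite /g fo ?(ltnW hb) // scaler0 addr0.
  by case: b hb => // b hb; rewrite fo.
move=> a ha; rewrite HvD HvZ -[RHS](hS a ha) Hv_shift.
have fo' : forall b, (j.+1 < b)%N -> f b = 0.
  by move=> b hb; rewrite fo //; apply: ltnW.
rewrite (Hv_trunc s a (f := f) (leqnSn j) fo).
rewrite scaleNr; congr (_ - _).
rewrite /Hv big_nat_recl // mulmx0 add0r.
by apply: eq_bigr => b _; rewrite addnS addSn.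
Qed.

End Shift.

Section Ranges.
Variable C : numClosedFieldType.
Variable q : nat.
Variable alpha : C.
Variable s : nat -> 'M[C]_q.
Variables N N' : nat.
Hypothesis hp : psd (Hank s N).
Hypothesis hp' : psd (Hank (sshift alpha s) N').

Lemma Ldiag_herm (s0 : nat -> 'M[C]_q) N0 n : psd (Hank s0 N0) -> (n <= N0)%N -> ctr (Ldiag s0 n) = Ldiag s0 n.
Proof.
move=> h hn; rewrite /Ldiag ctr_mxdiag; apply/eq_mxdiag => i.
by have [-> _ _] := Schur_props h (leq_trans (ltn_ord i : (i <= n)%N) hn).
Qed.

Lemma Ldiag_ker (s0 : nat -> 'M[C]_q) n (y : 'cV[C]_(bs q n.+1)) : Ldiag s0 n *m y = 0 ->
  forall j, (j <= n)%N -> Lschur s0 j *m blk y j = 0.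
Proof. by rewrite -{1}(vec_blk y) Ldiag_vec => /vec_eq0. Qed.

Lemma range_a1 n : (n <= N)%N -> (n <= N')%N ->
  (imgsp (ctr (Tmx C q n)) (Dsp s n) <= Dsp (sshift alpha s) n)%MS.
Proof.
move=> hn hn'; rewrite /imgsp /Dsp /rangesp -trmx_mul; apply: range_sub => y.
rewrite (Ldiag_herm hp') // => /Ldiag_ker hy.
rewrite ctrM ctrK (Ldiag_herm hp) // -mulmxA -(vec_blk y) shift_vec // Ldiag_vec.
rewrite -(vec0 C q n); apply: vec_eq => -[|j] hj; first by rewrite mulmx0.
apply: (ker_incl2 hp hp'); try lia; exact: hy (ltnW hj).
Qed.

Lemma range_a2 n : (n < N)%N -> (n <= N')%N ->
  (Dsp (sshift alpha s) n <= Dsp s n)%MS.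
Proof.
move=> hn hn'; rewrite /Dsp; apply: range_sub => y.
rewrite (Ldiag_herm hp) 1?ltnW // => /Ldiag_ker hy.
rewrite (Ldiag_herm hp') // -(vec_blk y) Ldiag_vec.
rewrite -(vec0 C q n); apply: vec_eq => j hj.
apply: (ker_incl1 hp hp'); try lia; exact: hy.
Qed.

Lemma range_b1 m : (m < N)%N -> (m < N')%N ->
  (imgsp (ctr (fVmx C q m.+1)) (Dsp s m.+1) <= Dsp (sshift alpha s) m)%MS.
Proof.
move=> hn hn'; rewrite /imgsp /Dsp /rangesp -trmx_mul; apply: range_sub => y.
rewrite (Ldiag_herm hp') 1?ltnW // => /Ldiag_ker hy.
rewrite ctrM ctrK (Ldiag_herm hp) // -mulmxA -(vec_blk y) shift_vec // Ldiag_vec.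
rewrite -(vec0 C q m.+1); apply: vec_eq => -[|j] hj; first by rewrite mulmx0.
apply: (ker_incl2 hp hp'); try lia; exact: hy.
Qed.

Lemma range_b2 m : (m < N)%N -> (m < N')%N ->
  (imgsp (Vmx C q m.+1) (Dsp (sshift alpha s) m) <= Dsp s m.+1)%MS.
Proof.
move=> hn hn'; rewrite /imgsp /Dsp /rangesp -trmx_mul; apply: range_sub => y.
rewrite (Ldiag_herm hp) // => /Ldiag_ker hy.
rewrite ctrM (Ldiag_herm hp') 1?ltnW // -mulmxA.
have -> : ctr (Vmx C q m.+1) = @mxblock C m.+1 m.+2 (fun _ => q) (fun _ => q)
    (fun j k => if val k == val j then 1%:M else 0).
  by rewrite /Vmx ctr_mxblock; apply/eq_mxblock => i j; rewrite ctr_if1.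
rewrite -(vec_blk y) diag_vec // Ldiag_vec.
rewrite -(vec0 C q m); apply: vec_eq => j hj.
apply: (ker_incl1 hp hp'); try lia; apply: hy; lia.
Qed.

End Ranges.

Section Final.
Variable C : numClosedFieldType.
Variable q : nat.
Implicit Types (s t : nat -> 'M[C]_q).

Lemma Hank_agree s (s2 : nat -> 'M[C]_q) n : (forall k, (k <= n.*2)%N -> s k = s2 k) -> Hank s n = Hank s2 n.
Proof.
move=> H; rewrite /Hank; apply/eq_mxblock => i j; apply: H.
have := ltn_ord i; have := ltn_ord j; lia.
Qed.

Lemma Lschur_agree s (s2 : nat -> 'M[C]_q) j : (forall k, (k <= j.*2)%N -> s k = s2 k) ->
  Lschur s j = Lschur s2 j.
Proof.
case: j => [|m] H; first exact: H 0%N isT.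
rewrite !LschurS (Hank_agree (s2 := s2) (n := m)) => [|k hk]; last by apply: H; lia.
rewrite H //; congr (_ - _ *m _ *m _); [apply/eq_mxrow|apply/eq_mxcol] => i;
  apply: H; have := ltn_ord i; lia.
Qed.

Lemma Dsp_agree s (s2 : nat -> 'M[C]_q) n : (forall k, (k <= n.*2)%N -> s k = s2 k) -> Dsp s n = Dsp s2 n.
Proof.
move=> H; rewrite /Dsp /Ldiag; congr rangesp; apply/eq_mxdiag => i.
apply: Lschur_agree => k hk; apply: H; have := ltn_ord i; lia.
Qed.

Lemma sshift_agree (alpha : C) s (s2 : nat -> 'M[C]_q) M : (forall k, (k <= M.+1)%N -> s k = s2 k) ->
  forall k, (k <= M)%N -> sshift alpha s k = sshift alpha s2 k.
Proof. by move=> H k hk; rewrite /sshift H ?H //; apply: leqW. Qed.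

Lemma Kge_S (alpha : C) s L : Kge alpha s L.+1 ->
  psd (Hank s (L.+1)./2) /\ psd (Hank (sshift alpha s) L./2).
Proof.
rewrite /Kge /=.
by case hL: (odd L) => /=; rewrite uphalf_half hL /= ?add0n ?add1n.
Qed.

Lemma get_ext (alpha : C) kappa s M : Kge_e alpha kappa s -> le_kappa M kappa ->
  exists s2 N N', [/\ forall k, (k <= M)%N -> s2 k = s k, ((M.+1)./2 <= N)%N,
     (M./2 <= N')%N, psd (Hank s2 N) & psd (Hank (sshift alpha s2) N')].
Proof.
case: kappa => [K|] hK hM; rewrite /= in hK hM.
  have [t ht] := hK; have [h1 h2] := Kge_S ht.
  exists (fun j => if j == K.+1 then t else s j); exists (K.+1)./2, K./2; split; [|apply: half_leq|apply: half_leq|exact: h1|exact: h2] => //.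
  by move=> k hk; rewrite ifN //; apply/eqP; lia.
have [h1 h2] := Kge_S (hK M.+1).
by exists s, (M.+1)./2, M./2; split.
Qed.

End Final.

Unset Implicit Arguments.

Theorem proposition8p7 (C : numClosedFieldType) (q : nat) (alpha : C)
    (kappa : option nat) (s : nat -> 'M[C]_q) :
  alpha \is Num.real ->
  Kge_e alpha kappa s ->
  (forall n : nat, le_kappa (n.*2.+1) kappa ->
     [/\ (imgsp (ctr (Tmx C q n)) (Dsp s n) <= Dsp (sshift alpha s) n)%MS,
         (Dsp (sshift alpha s) n <= Dsp s n)%MS,
         dsum_full (nullsp (Hank s n)) (Dsp s n)
       & dsum_full (nullsp (Hank (sshift alpha s) n)) (Dsp (sshift alpha s) n)])
  /\
  (forall m : nat, le_kappa (m.+1).*2 kappa ->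
     (* n = m+1 >= 1, n-1 = m *)
     [/\ (imgsp (ctr (fVmx C q m.+1)) (Dsp s m.+1) <= Dsp (sshift alpha s) m)%MS,
         (imgsp (Vmx C q m.+1) (Dsp (sshift alpha s) m) <= Dsp s m.+1)%MS,
         dsum_full (nullsp (Hank s m.+1)) (Dsp s m.+1)
       & dsum_full (nullsp (Hank (sshift alpha s) m)) (Dsp (sshift alpha s) m)]).
Proof.
move=> _ hK; split.
  move=> n hn; have [s2 [N [N' [ag hN hN' hp hp']]]] := get_ext hK hn.
  have hN1 : (n < N)%N by move: hN; rewrite /= ?doubleK ?uphalf_double.
  have hN1' : (n <= N')%N by move: hN'; rewrite /= ?doubleK ?uphalf_double.
  have ag1 : forall k, (k <= n.*2)%N -> s k = s2 k by move=> k hk; rewrite ag //; lia.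
  have ag2 : forall k, (k <= n.*2)%N -> sshift alpha s k = sshift alpha s2 k.
    by apply: sshift_agree => k hk; rewrite ag.
  rewrite (Dsp_agree ag1) (Dsp_agree ag2) (Hank_agree ag1) (Hank_agree ag2).
  split.
  - have := range_a1 hp hp' (ltnW hN1) hN1'. move=> X. exact X.
  - have X := range_a2 hp hp' hN1 hN1'; exact X.
  - have X := dsum_main hp (ltnW hN1); exact X.
  - have X := dsum_main hp' hN1'; exact X.
move=> m hm; have [s2 [N [N' [ag hN hN' hp hp']]]] := get_ext hK hm.
have hN1 : (m < N)%N by move: hN; rewrite /= ?doubleK ?uphalf_double.
have hN1' : (m < N')%N by move: hN'; rewrite /= ?doubleK ?uphalf_double.
have ag1 : forall k, (k <= (m.+1).*2)%N -> s k = s2 k by move=> k hk; rewrite ag.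
have ag2 : forall k, (k <= m.*2)%N -> sshift alpha s k = sshift alpha s2 k.
  by apply: sshift_agree => k hk; rewrite ag //; lia.
have ag3 : forall k, (k <= m.*2)%N -> s k = s2 k by move=> k hk; rewrite ag //; lia.
rewrite (Dsp_agree ag1) (Dsp_agree ag2) (Hank_agree ag1) (Hank_agree ag2).
split.
- have X := range_b1 hp hp' hN1 hN1'; exact X.
- have X := range_b2 hp hp' hN1 hN1'; exact X.
- have X := dsum_main hp hN1; exact X.
- have X := dsum_main hp' (ltnW hN1'); exact X.
Qed.
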